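(* Let $C$ be a bounded closed convex subset of a Hilbert space $H$ and let $T : C \rightarrow C$ be a $(b,k)$-enriched strictly pseudocontractive mapping for some $0 \leq k < 1$. Then $\mathrm{Fix}(T) \neq \emptyset$ and, for any given $x_0 \in C$ and any control sequence $\{\alpha_n\}$ of real numbers such that $k < \alpha_n < 1$ for all $n$ and $$\sum_{n=0}^{\infty} (\alpha_n - k)(1 - \alpha_n) = \infty,$$ the Krasnoselskij-Mann iteration $\{x_n\}_{n=0}^\infty$ given by $$x_{n+1} = (1 - \lambda\alpha_n)x_n + \lambda\alpha_n T x_n, \quad n \geq 0,$$ for some $\lambda \in (0,1)$, converges weakly to a fixed point of $T$.
   Context: For a mapping $T : C \to C$, $C \subseteq H$, $\mathrm{Fix}(T) = \{x \in C : Tx = x\}$. A mapping $T : C \to C$ is called $(b,k)$-enriched strictly pseudocontractive if there exist $b \in [0,\infty)$ and $k < 1$ such that for all $x, y \in C$, $$\|b(x - y) + Tx - Ty\|^2 \leq (b + 1)^2\|x - y\|^2 + k\|x - y - (Tx - Ty)\|^2.$$ *)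

(* Defs.v *)
From HB Require Import structures.
From mathcomp Require Import all_boot all_order all_algebra.
From mathcomp Require Import all_classical all_reals all_analysis.
Set Implicit Arguments. Unset Strict Implicit. Unset Printing Implicit Defensive.
Import Order.TTheory GRing.Theory Num.Theory.
Import numFieldNormedType.Exports.
Local Open Scope classical_set_scope.
Local Open Scope ring_scope.

(* A (real) inner product on a normed module V whose norm it induces.
   A real Hilbert space is then a complete normed module
   (completeNormedModType R) equipped with such an inner product. *)
Record inner_product (R : realType) (V : normedModType R) := InnerProduct {
  ip :> V -> V -> R;
  ip_sym : forall x y, ip x y = ip y x;
  ip_linear : forall (a : R) x y z, ip (a *: x + y) z = a * ip x z + ip y z;
  ip_norm : forall x, ip x x = `|x| ^+ 2
}.

Definition Fix (R : realType) (V : normedModType R) (C : set V) (T : V -> V) : set V :=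
  [set x | C x /\ T x = x].

Definition enriched_spc (R : realType) (V : normedModType R) (C : set V)
    (T : V -> V) (b k : R) : Prop :=
  0 <= b /\ k < 1 /\
  forall x y, C x -> C y ->
    `|b *: (x - y) + (T x - T y)| ^+ 2
      <= (b + 1) ^+ 2 * `|x - y| ^+ 2 + k * `|x - y - (T x - T y)| ^+ 2.

Fixpoint km_iter (R : realType) (V : normedModType R) (T : V -> V) (lam : R)
    (alpha : nat -> R) (x0 : V) (n : nat) : V :=
  match n with
  | 0 => x0
  | n'.+1 => let xn := km_iter T lam alpha x0 n' in
      (1 - lam * alpha n') *: xn + (lam * alpha n') *: T xn
  end.

Definition weak_cvg (R : realType) (V : normedModType R) (I : inner_product V)
    (u : nat -> V) (p : V) : Prop :=
  forall y : V, (fun n => I (u n) y) @ \oo --> I p y.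

(* Main.v *)
Require Import Defs.
From HB Require Import structures.
From mathcomp Require Import all_boot all_order all_algebra.
From mathcomp Require Import all_classical all_reals all_analysis.
From mathcomp Require Import ring lra.
Import Order.TTheory GRing.Theory Num.Theory.
Import numFieldNormedType.Exports.
Local Open Scope classical_set_scope.
Local Open Scope ring_scope.

Section IP.
Variables (R : realType) (H : normedModType R) (I : inner_product H).

Lemma ip0l z : I 0 z = 0.
Proof.
have := ip_linear I 1 0 0 z; rewrite scale1r addr0 mul1r => h; lra.
Qed.
Lemma ipDl x y z : I (x + y) z = I x z + I y z.
Proof. by have := ip_linear I 1 x y z; rewrite scale1r mul1r. Qed.
Lemma ipZl a x z : I (a *: x) z = a * I x z.
Proof. by have := ip_linear I a x 0 z; rewrite addr0 ip0l addr0. Qed.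
Lemma ipNl x z : I (- x) z = - I x z.
Proof. by rewrite -scaleN1r ipZl mulN1r. Qed.
Lemma ipBl x y z : I (x - y) z = I x z - I y z.
Proof. by rewrite ipDl ipNl. Qed.
Lemma ipDr x y z : I z (x + y) = I z x + I z y.
Proof. by rewrite ip_sym ipDl !(ip_sym I z). Qed.
Lemma ipZr a x z : I z (a *: x) = a * I z x.
Proof. by rewrite ip_sym ipZl (ip_sym I z). Qed.
Lemma ipNr x z : I z (- x) = - I z x.
Proof. by rewrite ip_sym ipNl (ip_sym I z). Qed.
Lemma ipBr x y z : I z (x - y) = I z x - I z y.
Proof. by rewrite ipDr ipNr. Qed.
Lemma nsq x : `|x| ^+ 2 = I x x.
Proof. by rewrite ip_norm. Qed.

Lemma normD2 x y : `|x + y| ^+ 2 = `|x| ^+ 2 + 2 * I x y + `|y| ^+ 2.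
Proof. rewrite !nsq ipDl !ipDr (ip_sym I y x); ring. Qed.
Lemma normB2 x y : `|x - y| ^+ 2 = `|x| ^+ 2 - 2 * I x y + `|y| ^+ 2.
Proof. by rewrite normD2 normrN ipNr; ring. Qed.

Lemma conv_id (t : R) (u v : H) :
  `|(1 - t) *: u + t *: v| ^+ 2 =
  (1 - t) * `|u| ^+ 2 + t * `|v| ^+ 2 - t * (1 - t) * `|u - v| ^+ 2.
Proof.
rewrite normD2 normB2 !normrZ !exprMn !real_normK ?num_real //.
rewrite ipZl ipZr; ring.
Qed.

Lemma mid_id (u a b : H) :
  `|u - (2^-1 *: (a + b))| ^+ 2 =
  2^-1 * `|u - a| ^+ 2 + 2^-1 * `|u - b| ^+ 2 - 4^-1 * `|a - b| ^+ 2.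
Proof.
have h : u - (2^-1 *: (a + b)) = (1 - 2^-1) *: (u - a) + 2^-1 *: (u - b).
  have -> : (1 - 2^-1 : R) = 2^-1 by field.
  rewrite -scalerDr addrACA -opprD scalerBr; congr (_ - _).
  have -> : u + u = 2 *: u by rewrite scaler_nat mulr2n.
  by rewrite scalerA mulVf ?scale1r // pnatr_eq0.
rewrite h conv_id.
have -> : u - a - (u - b) = - (a - b) by rewrite opprB addrC addrA subrK opprB.
by rewrite normrN; field.
Qed.
End IP.

Set Implicit Arguments. Unset Strict Implicit. Unset Printing Implicit Defensive.

Section LS.
Variable R : realType.

Definition io (P : nat -> Prop) := forall N, exists n, (N <= n)%N /\ P n.
Definition ev (P : nat -> Prop) (Q : nat -> Prop) :=
  exists N, forall n, (N <= n)%N -> P n -> Q n.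
Definition tailset (P : nat -> Prop) (f : nat -> R) N : set R :=
  [set f n | n in [set n | (N <= n)%N /\ P n]].
Definition LS P f : R := inf [set sup (tailset P f N) | N in [set: nat]].

Definition bnd (f : nat -> R) := exists M, forall n, `|f n| <= M.

Lemma LS_spec P f : io P -> bnd f ->
  (forall e, 0 < e -> ev P (fun n => f n <= LS P f + e)) /\
  (forall e, 0 < e -> forall N, exists n, [/\ (N <= n)%N, P n & LS P f - e <= f n]).
Proof.
move=> iP [M hM].
have fle n : f n <= M by apply: le_trans (ler_norm _) (hM n).
have fge n : - M <= f n by rewrite lerNl; apply: le_trans (hM n); rewrite -normrN ler_norm.
have ne N : tailset P f N !=set0.
  by have [n [Nn Pn]] := iP N; exists (f n), n.
have hs N : has_sup (tailset P f N).
  by split => //; exists M => _ [n _ <-].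
have supge N : - M <= sup (tailset P f N).
  have [n [Nn Pn]] := iP N; apply: le_trans (fge n) _.
  by apply: sup_upper_bound => //; exists n.
have hi : has_inf [set sup (tailset P f N) | N in [set: nat]].
  by split; [exists (sup (tailset P f 0)), 0%N | exists (- M) => _ [N _ <-]].
split.
- move=> e e0.
  have [_ [N _ <-] hN] := inf_adherent e0 hi.
  exists N => n Nn Pn; apply: le_trans (ltW hN).
  by apply: sup_upper_bound => //; exists n.
- move=> e e0 N.
  have [_ [n [Nn Pn] <-] hn] := sup_adherent e0 (hs N).
  exists n; split => //; apply: le_trans (ltW hn).
  rewrite lerD2r; apply: ge_inf; first by case: hi.
  by exists N.
Qed.

Lemma LS_ub P f r : io P -> bnd f ->
  (forall e, 0 < e -> ev P (fun n => f n <= r + e)) -> LS P f <= r.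
Proof.
move=> iP bf h; have [_ h2] := LS_spec iP bf.
apply/ler_addgt0Pr => e e0.
have e3 : 0 < e / 3 by rewrite divr_gt0.
have [N hN] := h _ e3.
have [n [Nn Pn hn]] := h2 _ e3 N.
have := hN n Nn Pn; lra.
Qed.

Lemma LS_lb P f r : io P -> bnd f ->
  (forall e, 0 < e -> ev P (fun n => r - e <= f n)) -> r <= LS P f.
Proof.
move=> iP bf h; have [h1 _] := LS_spec iP bf.
apply/ler_addgt0Pr => e e0.
have e3 : 0 < e / 3 by rewrite divr_gt0.
have [N1 hN1] := h _ e3; have [N2 hN2] := h1 _ e3.
have [n [Nn Pn]] := iP (maxn N1 N2).
have := hN1 n (leq_trans (leq_maxl _ _) Nn) Pn.
have := hN2 n (leq_trans (leq_maxr _ _) Nn) Pn; lra.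
Qed.

Lemma LS_le P f g : io P -> bnd f -> bnd g ->
  (forall e, 0 < e -> ev P (fun n => f n <= g n + e)) -> LS P f <= LS P g.
Proof.
move=> iP bf bg h; apply: LS_ub => // e e0.
have e2 : 0 < e / 2 by rewrite divr_gt0.
have [h1 _] := LS_spec iP bg.
have [N1 hN1] := h _ e2; have [N2 hN2] := h1 _ e2.
exists (maxn N1 N2) => n Nn Pn.
have := hN1 n (leq_trans (leq_maxl _ _) Nn) Pn.
have := hN2 n (leq_trans (leq_maxr _ _) Nn) Pn; lra.
Qed.

Lemma LS_ge0 P f : io P -> bnd f -> (forall n, 0 <= f n) -> 0 <= LS P f.
Proof.
move=> iP bf h; apply: LS_lb => // e e0; exists 0%N => n _ _.
by have := h n; lra.
Qed.

Lemma LS_noninc P f : io P -> bnd f -> (forall n, f n.+1 <= f n) ->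
  LS P f = LS (fun _ => True) f.
Proof.
move=> iP bf dec.
have iT : io (fun _ => True) by move=> N; exists N.
have [h1 h2] := LS_spec iT bf.
have mono m n : (m <= n)%N -> f n <= f m.
  move=> /subnK <-; elim: (n - m)%N => [|k ih]; first by rewrite add0n.
  by rewrite addSn; apply: le_trans (dec _) ih.
apply/eqP; rewrite eq_le; apply/andP; split.
- apply: LS_ub => // e e0; have [N hN] := h1 _ e0.
  by exists N => n Nn _; apply: hN.
- apply: LS_lb => // e e0; exists 0%N => n _ _.
  have [m [nm _ hm]] := h2 _ e0 n.
  by apply: le_trans hm (mono _ _ nm).
Qed.
End LS.

Lemma nearN (P : nat -> Prop) :
  (\forall n \near \oo, P n) <-> exists N, forall n, (N <= n)%N -> P n.
Proof. by split => [[N _ hN]|[N hN]]; exists N. Qed.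

Lemma inv_small (R : realType) (e : R) : 0 < e ->
  exists N, forall n, (N <= n)%N -> (n.+1%:R)^-1 < e.
Proof.
move=> e0; have /nearN [N hN] := nbhs_infty_gtr (e^-1).
exists N => n /hN h; rewrite -(invrK e) ltf_pV2 ?posrE ?invr_gt0 //.
by apply: lt_le_trans h _; rewrite ler_nat.
Qed.

Lemma argmin (R : realType) (H : completeNormedModType R) (K : set H) (g : H -> R) (ka : R) :
  0 < ka -> K !=set0 -> closed K ->
  (forall a b, K a -> K b -> K (2^-1 *: (a + b))) ->
  (forall w, K w -> 0 <= g w) ->
  (forall a b, K a -> K b ->
     g (2^-1 *: (a + b)) <= 2^-1 * g a + 2^-1 * g b - ka * `|a - b| ^+ 2) ->
  (forall w e, 0 < e -> exists2 d, 0 < d & forall v, `|w - v| < d -> g w <= g v + e) ->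
  exists2 m, K m & forall w, K w -> g m <= g w.
Proof.
move=> ka0 [k0 Kk0] cK midK g0 sc usc.
pose E := g @` K.
have hi : has_inf E by split; [exists (g k0), k0 | exists 0 => _ [w Kw <-]; apply: g0].
pose d := inf E.
have dle w : K w -> d <= g w by move=> Kw; apply: ge_inf; [case: hi|exists w].
have hw : forall j : nat, exists w, K w /\ g w < d + (j.+1%:R)^-1.
  move=> j; have j0 : 0 < (j.+1%:R : R)^-1 by rewrite invr_gt0.
  have [_ [w Kw <-] h] := inf_adherent j0 hi.
  by exists w.
have [w hw'] := choice hw.
have Kw j : K (w j) by case: (hw' j).
have gw j : g (w j) < d + (j.+1%:R)^-1 by case: (hw' j).
have cau i j : ka * `|w i - w j| ^+ 2 <= 2^-1 * (i.+1%:R)^-1 + 2^-1 * (j.+1%:R)^-1.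
  have := sc _ _ (Kw i) (Kw j); have := dle _ (midK _ _ (Kw i) (Kw j)).
  have := gw i; have := gw j.
  move: ((i.+1%:R : R)^-1) ((j.+1%:R : R)^-1) => a b; lra.
have cw : cvg (w @ \oo).
  apply: cauchy_cvg; apply: cauchy_exP => e e0.
  have ke : 0 < ka * e ^+ 2 by rewrite mulr_gt0 // exprn_gt0.
  have [N hN] := inv_small ke.
  exists (w N); apply/nearN; exists N => n Nn /=.
  rewrite -ball_normE /=.
  have := cau N n; have := hN N (leqnn _); have := hN n Nn.
  have := normr_ge0 (w N - w n).
  move: (`|w N - w n|) => x; move: ((N.+1%:R : R)^-1) ((n.+1%:R : R)^-1) => a b h1 h2 h3 h4.
  have : ka * x ^+ 2 < ka * e ^+ 2 by lra.
  rewrite ltr_pM2l // => h5; nra.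
have wl : w @ \oo --> lim (w @ \oo) by exact: cw.
set l := lim (w @ \oo) in wl.
have Kl : K l.
  by apply: (@closed_cvg _ _ _ _ w K cK _ l wl); apply/nearN; exists 0%N.
exists l => // v Kv; apply: le_trans (dle _ Kv).
apply/ler_addgt0Pr => e e0.
have e2 : 0 < e / 2 by rewrite divr_gt0.
have [dl dl0 hdl] := usc l _ e2.
move/cvgrPdist_lt: wl => /(_ _ dl0) /nearN [N1 hN1].
have [N2 hN2] := inv_small e2.
pose n := maxn N1 N2.
have := hdl _ (hN1 n (leq_maxl _ _)); have := hN2 n (leq_maxr _ _); have := gw n.
move: ((n.+1%:R : R)^-1) => a; lra.
Qed.

Lemma argmin_uniq (R : realType) (H : normedModType R) (K : set H) (g : H -> R) (ka : R) m m' :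
  0 < ka ->
  (forall a b, K a -> K b -> K (2^-1 *: (a + b))) ->
  (forall a b, K a -> K b ->
     g (2^-1 *: (a + b)) <= 2^-1 * g a + 2^-1 * g b - ka * `|a - b| ^+ 2) ->
  K m -> (forall w, K w -> g m <= g w) -> K m' -> g m' <= g m -> m' = m.
Proof.
move=> ka0 midK sc Km hm Km' h.
have := sc _ _ Km Km'; have := hm _ (midK _ _ Km Km') => h1 h2.
have : ka * `|m - m'| ^+ 2 <= 0 by lra.
rewrite pmulr_rle0 // => h3.
have : `|m - m'| = 0 by apply/eqP; rewrite -sqrf_eq0 eq_le h3 sqr_ge0.
by move/eqP; rewrite normr_eq0 subr_eq0 => /eqP.
Qed.

Lemma convC (R : realType) (H : normedModType R) (C : set H) (a b : H) (t : R) :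
  convex_set C -> C a -> C b -> 0 <= t -> t <= 1 -> C (t *: a + (1 - t) *: b).
Proof.
move=> cC Ca Cb t0 t1.
by have := cC a b (Itv01 t0 t1); rewrite !inE => /(_ Ca Cb).
Qed.

Lemma convmid (R : realType) (H : normedModType R) (C : set H) (a b : H) :
  convex_set C -> C a -> C b -> C (2^-1 *: (a + b)).
Proof.
move=> cC Ca Cb.
have h0 : (0 : R) <= 2^-1 by rewrite invr_ge0.
have h1 : (2^-1 : R) <= 1 by rewrite invf_le1 // ler1n.
have := convC cC Ca Cb h0 h1.
have -> : (1 - 2^-1 : R) = 2^-1 by field.
by rewrite scalerDr.
Qed.

Section Center.
Variables (R : realType) (H : completeNormedModType R) (I : inner_product H).

Definition bndv (x : nat -> H) := exists M, forall n, `|x n| <= M.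

Definition phi P (x : nat -> H) z := LS P (fun n => `|x n - z| ^+ 2).

Lemma bnd_sq (x : nat -> H) z : bndv x -> bnd (fun n => `|x n - z| ^+ 2).
Proof.
move=> [M hM]; exists ((M + `|z|) ^+ 2) => n.
rewrite ger0_norm ?sqr_ge0 //; have h : `|x n - z| <= M + `|z|.
  by apply: le_trans (ler_normB _ _) _; rewrite lerD2r.
by rewrite lerXn2r // ?nnegrE //; apply: le_trans h.
Qed.

Lemma phi_ge0 P x z : io P -> bndv x -> 0 <= phi P x z.
Proof. by move=> iP bx; apply: LS_ge0 => //; exact: bnd_sq. Qed.

Lemma phi_sc P x a b : io P -> bndv x ->
  phi P x (2^-1 *: (a + b)) <= 2^-1 * phi P x a + 2^-1 * phi P x b - 4^-1 * `|a - b| ^+ 2.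
Proof.
move=> iP bx; apply: LS_ub => //; first exact: bnd_sq.
move=> e e0.
have [h1 _] := LS_spec iP (bnd_sq a bx).
have [h2 _] := LS_spec iP (bnd_sq b bx).
have [N1 hN1] := h1 _ e0; have [N2 hN2] := h2 _ e0.
exists (maxn N1 N2) => n Nn Pn; rewrite (@mid_id _ _ I).
have := hN1 n (leq_trans (leq_maxl _ _) Nn) Pn.
have := hN2 n (leq_trans (leq_maxr _ _) Nn) Pn.
rewrite /phi; lra.
Qed.

Lemma sqdist_cont (M : R) (w : H) e : 0 <= M -> 0 < e -> exists2 d, 0 < d &
  forall v u, `|u| <= M -> `|w - v| < d -> `|u - w| ^+ 2 <= `|u - v| ^+ 2 + e.
Proof.
move=> M0 e0; pose B := 2 * M + 2 * `|w| + 3.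
have B0 : 0 < B by rewrite /B; have := normr_ge0 w; lra.
exists (Num.min 1 (e / B)) => [|v u hu hd].
  by rewrite lt_min ltr01 divr_gt0.
have d1 : `|w - v| <= 1 by apply: ltW; apply: lt_le_trans hd _; rewrite ge_min lexx.
have d2 : `|w - v| <= e / B by apply: ltW; apply: lt_le_trans hd _; rewrite ge_min lexx orbT.
have t1 : `|u - w| <= `|u - v| + `|w - v|.
  have -> : u - w = (u - v) - (w - v) by rewrite opprB addrA subrK.
  exact: ler_normB.
have t2 : `|u - v| <= M + `|w| + 1.
  have -> : u - v = (u - w) + (w - v) by rewrite addrA subrK.
  apply: le_trans (ler_normD _ _) _; apply: lerD => //.
  by apply: le_trans (ler_normB _ _) _; rewrite lerD2r.
have d3 : `|w - v| * B <= e by rewrite -ler_pdivlMr.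
have := normr_ge0 (u - w); have := normr_ge0 (u - v); have := normr_ge0 (w - v).
move: (`|u - w|) (`|u - v|) (`|w - v|) t1 t2 d1 d3 => a b c; rewrite /B => *.
nra.
Qed.

Lemma phi_usc P x w e : io P -> bndv x -> 0 < e -> exists2 d, 0 < d &
  forall v, `|w - v| < d -> phi P x w <= phi P x v + e.
Proof.
move=> iP bx e0; have [M hM] := bx.
have M0 : 0 <= M by apply: le_trans (hM 0%N).
have [d d0 hd] := sqdist_cont w M0 e0.
exists d => // v wv; apply: LS_ub => //; first exact: bnd_sq.
move=> e' e'0.
have [h1 _] := LS_spec iP (bnd_sq v bx).
have [N hN] := h1 _ e'0; exists N => n Nn Pn.
have := hN n Nn Pn; have := hd v (x n) (hM n) wv; rewrite /phi; lra.
Qed.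

Lemma center_ex P x : io P -> bndv x -> exists c, forall z, phi P x c <= phi P x z.
Proof.
move=> iP bx.
have ka : (0 : R) < 4^-1 by rewrite invr_gt0.
have [m _ hm] := @argmin R H setT (phi P x) _ ka (ex_intro _ 0 Logic.I) closedT
  (fun _ _ _ _ => Logic.I) (fun w _ => phi_ge0 w iP bx) (fun a b _ _ => phi_sc a b iP bx)
  (fun w e e0 => phi_usc w iP bx e0).
by exists m => z; apply: hm.
Qed.

Lemma center_uniq P x c z : io P -> bndv x -> (forall z, phi P x c <= phi P x z) ->
  phi P x z <= phi P x c -> z = c.
Proof.
move=> iP bx hc hz.
have ka : (0 : R) < 4^-1 by rewrite invr_gt0.
by apply: (@argmin_uniq R H setT (phi P x) _ c z ka) => // a b _ _; apply: phi_sc.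
Qed.
End Center.
Lemma vid1 (R : realType) (H : normedModType R) (z y p : H) (t : R) :
  z - (t *: y + (1 - t) *: p) = (z - p) - t *: (y - p).
Proof.
rewrite scalerBl scale1r scalerBr opprD opprB opprB.
rewrite -[RHS]addrA; congr (_ + _).
by rewrite addrCA [RHS]addrCA [- p + _]addrC.
Qed.

Section Proj.
Variables (R : realType) (H : completeNormedModType R) (I : inner_product H).

Lemma proj_ex (C : set H) z : C !=set0 -> closed C -> convex_set C ->
  exists2 p, C p & forall y, C y -> `|y - p| <= `|y - z|.
Proof.
move=> C0 cC vC.
have ka : (0 : R) < 4^-1 by rewrite invr_gt0.
have sc : forall a b, C a -> C b ->
    `|z - 2^-1 *: (a + b)| ^+ 2 <= 2^-1 * `|z - a| ^+ 2 + 2^-1 * `|z - b| ^+ 2 - 4^-1 * `|a - b| ^+ 2.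
  by move=> a b _ _; rewrite (@mid_id _ _ I); lra.
have usc : forall w e, 0 < e -> exists2 d, 0 < d & forall v, `|w - v| < d ->
    `|z - w| ^+ 2 <= `|z - v| ^+ 2 + e.
  move=> w e e0.
  have [d d0 hd] := @sqdist_cont R H `|z| w e (normr_ge0 _) e0.
  by exists d => // v wv; apply: hd.
have [p Cp hp] := @argmin R H C (fun w => `|z - w| ^+ 2) _ ka C0 cC
  (fun a b Ca Cb => convmid vC Ca Cb) (fun w _ => sqr_ge0 _) sc usc.
  exists p => // y Cy.
  have key : I (z - p) (y - p) <= 0.
    rewrite leNgt; apply/negP => ip0.
    pose q := `|y - p| ^+ 2.
    have q0 : 0 <= q by exact: sqr_ge0.
    pose t := Num.min 1 (I (z - p) (y - p) / (q + 1)).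
    have t0 : 0 < t by rewrite lt_min ltr01 divr_gt0 //; lra.
    have t1 : t <= 1 by rewrite ge_min lexx.
    have t2 : t <= I (z - p) (y - p) / (q + 1) by rewrite ge_min lexx orbT.
    have Ct : C (t *: y + (1 - t) *: p) by apply: convC => //; apply: ltW.
    have := hp _ Ct; rewrite vid1 [`|z - p - _| ^+ 2](@normB2 _ _ I) normrZ exprMn (ger0_norm (ltW t0)).
    rewrite (@ipZr _ _ I) -/q => h.
    have h2 : 2 * I (z - p) (y - p) <= t * q.
      have : t * (2 * I (z - p) (y - p)) <= t * (t * q) by lra.
      by rewrite ler_pM2l.
    have : t * (q + 1) <= I (z - p) (y - p) by rewrite -ler_pdivlMr //; lra.
    nra.
  rewrite -(ler_pXn2r (_ : (0 < 2)%N)) ?nnegrE //.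
  have -> : y - z = (y - p) - (z - p) by rewrite opprB addrA subrK.
  rewrite [`|y - p - _| ^+ 2](@normB2 _ _ I) (ip_sym I (y - p)); have := sqr_ge0 `|z - p|; lra.
Qed.

Lemma center_in (C : set H) P x c : C !=set0 -> closed C -> convex_set C ->
  io P -> bndv x -> (forall n, C (x n)) ->
  (forall z, phi P x c <= phi P x z) -> C c.
Proof.
move=> C0 cC vC iP bx xC hc.
have [p Cp hp] := proj_ex c C0 cC vC.
suff -> : c = p by [].
symmetry; apply: (center_uniq I iP bx hc).
apply: LS_le => //; try exact: bnd_sq.
move=> e e0; exists 0%N => n _ _.
have h := hp _ (xC n).
have : `|x n - p| ^+ 2 <= `|x n - c| ^+ 2 by rewrite lerXn2r // nnegrE.
lra.
Qed.
End Proj.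
Lemma vid2 (R : realType) (H : normedModType R) (a b : H) (t : R) :
  t *: a + (1 - t) *: b - a = (1 - t) *: (b - a).
Proof.
by rewrite addrAC -{2}(scale1r a) -scalerBl scalerBr addrC -scaleNr opprB.
Qed.
Lemma vid3 (R : realType) (H : normedModType R) (a b c : H) (t : R) :
  (t *: a + c) - (t *: b + c) = t *: (a - b).
Proof.
rewrite opprD addrACA subrr addr0 scalerBr //.
Qed.

Section Fixed.
Variables (R : realType) (H : completeNormedModType R) (I : inner_product H).
Variables (C : set H) (N : H -> H) (M : R).
Hypothesis C0 : C !=set0.
Hypothesis cC : closed C.
Hypothesis vC : convex_set C.
Hypothesis CM : forall y, C y -> `|y| <= M.
Hypothesis NC : forall y, C y -> C (N y).
Hypothesis Nne : forall y z, C y -> C z -> `|N y - N z| <= `|y - z|.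

Lemma M0 : 0 <= M.
Proof. by have [y Cy] := C0; apply: le_trans (CM Cy). Qed.

Lemma bndC (x : nat -> H) : (forall n, C (x n)) -> bndv x.
Proof. by move=> xC; exists M => n; apply: CM. Qed.

Lemma distC y z : C y -> C z -> `|y - z| <= 2 * M.
Proof.
move=> Cy Cz; apply: le_trans (ler_normB _ _) _.
have := CM Cy; have := CM Cz; lra.
Qed.

Lemma afix_phi P x c : io P -> (forall n, C (x n)) -> C c ->
  (forall eta, 0 < eta -> exists K, forall n, (K <= n)%N -> `|x n - N (x n)| <= eta) ->
  phi P x (N c) <= phi P x c.
Proof.
move=> iP xC Cc res; have bx := bndC xC.
apply: LS_ub => //; first exact: bnd_sq.
move=> e e0.
have M0' := M0.
have e2 : 0 < e / 2 by rewrite divr_gt0.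
pose eta := Num.min 1 (e / 2 / (1 + 4 * M)).
have B0 : 0 < 1 + 4 * M by lra.
have eta0 : 0 < eta by rewrite lt_min ltr01 divr_gt0.
have eta1 : eta <= 1 by rewrite ge_min lexx.
have eta2 : eta * (1 + 4 * M) <= e / 2.
  by rewrite -ler_pdivlMr // ge_min lexx orbT.
have [h1 _] := LS_spec iP (bnd_sq c bx).
have [N1 hN1] := h1 _ e2; have [N2 hN2] := res _ eta0.
exists (maxn N1 N2) => n Nn Pn.
have k1 := hN1 n (leq_trans (leq_maxl _ _) Nn) Pn.
have k2 := hN2 n (leq_trans (leq_maxr _ _) Nn).
have k3 : `|x n - N c| <= eta + `|x n - c|.
  have -> : x n - N c = (x n - N (x n)) + (N (x n) - N c) by rewrite addrA subrK.
  apply: le_trans (ler_normD _ _) _; apply: lerD => //; exact: Nne.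
have k4 := distC (xC n) Cc.
have k5 := normr_ge0 (x n - N c); have k6 := normr_ge0 (x n - c).
rewrite /phi in k1 *.
move: (`|x n - N c|) (`|x n - c|) k1 k3 k4 k5 k6 => a d k1 k3 k4 k5 k6.
have : a ^+ 2 <= (eta + d) ^+ 2 by rewrite lerXn2r // nnegrE; lra.
have : eta * (eta + 2 * d) <= eta * (1 + 4 * M) by rewrite ler_pM2l //; lra.
nra.
Qed.

Lemma iTrue : io (fun _ => True).
Proof. by move=> n; exists n. Qed.

Lemma picard (t : R) u : 0 <= t -> t < 1 -> C u ->
  exists2 m, C m & `|m - N m| <= (1 - t) * (2 * M).
Proof.
move=> t0 t1 Cu.
pose U z := t *: N z + (1 - t) *: u.
have UC z : C z -> C (U z) by move=> Cz; apply: convC => //; [exact: NC|lra].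
have Une a b : C a -> C b -> `|U a - U b| <= `|a - b|.
  move=> Ca Cb; rewrite /U vid3 normrZ ger0_norm //.
  apply: le_trans (Nne Ca Cb); rewrite ler_piMl //; lra.
pose y n := iter n U u.
have yC n : C (y n) by elim: n => [|n ih] //=; apply: UC.
have by_ := bndC yC.
have [m hm] := center_ex I iTrue by_.
have Cm : C m := center_in I C0 cC vC iTrue by_ yC hm.
have Um : U m = m.
  apply: (center_uniq I iTrue by_ hm).
  apply: LS_ub; [exact: iTrue|exact: bnd_sq|].
  move=> e e0; have [h1 _] := LS_spec iTrue (bnd_sq m by_).
  have [N1 hN1] := h1 _ e0; exists N1.+1 => -[//|n] Nn _.
  apply: le_trans (hN1 n Nn Logic.I).
  by rewrite lerXn2r // ?nnegrE //; apply: Une.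
exists m => //.
have -> : m - N m = U m - N m by rewrite Um.
rewrite /U vid2 normrZ ger0_norm; last by lra.
by rewrite ler_pM2l; [apply: distC => //; exact: NC|lra].
Qed.

Lemma fix_ex : exists2 c, C c & N c = c.
Proof.
have [u Cu] := C0.
have hz : forall j : nat, exists z, C z /\ `|z - N z| <= (j.+1%:R)^-1 * (2 * M).
  move=> j.
  have h1 : (j.+1%:R : R)^-1 <= 1 by rewrite invf_le1 // ler1n.
  have h0 : 0 < (j.+1%:R : R)^-1 by rewrite invr_gt0.
  move: ((j.+1%:R : R)^-1) h0 h1 => a h0 h1.
  have [m Cm hm] : exists2 m, C m & `|m - N m| <= (1 - (1 - a)) * (2 * M).
    by apply: (picard (u := u)) => //; lra.
  have e : (1 - (1 - a)) = a by ring.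
  by exists m; split => //; move: hm; rewrite e.
have [z hz'] := choice hz.
have zC n : C (z n) by case: (hz' n).
have bz := bndC zC.
have [c hc] := center_ex I iTrue bz.
have Cc : C c := center_in I C0 cC vC iTrue bz zC hc.
exists c => //.
apply: (center_uniq I iTrue bz hc); apply: (afix_phi iTrue zC Cc) => eta eta0.
have M0' := M0.
have eM : 0 < eta / (2 * M + 1) by rewrite divr_gt0 //; lra.
have [K hK] := inv_small eM.
exists K => n Kn; have [_ h] := hz' n; apply: le_trans h _.
have := hK n Kn; rewrite ltr_pdivlMr; last lra.
move: ((n.+1%:R : R)^-1) => a; nra.
Qed.
End Fixed.

Section V. Variables (R : realType) (H : normedModType R).
Lemma vid5 (a b q : H) : (a - q) - (b - q) = a - b.
Proof. by rewrite opprB addrA subrK. Qed.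
Lemma vid6 (a b : H) (s : R) : a - ((1 - s) *: a + s *: b) = s *: (a - b).
Proof. by rewrite scalerBl scale1r opprD opprB addrA addrCA subrr addr0 -scalerBr. Qed.
Lemma vid7 (a b c : H) (s : R) : ((1 - s) *: a + s *: b) - c = (1 - s) *: (a - b) + (b - c).
Proof.
rewrite [RHS]addrA; congr (_ - _); rewrite scalerBr -addrA; congr (_ + _).
by rewrite scalerBl scale1r opprB subrK.
Qed.
Lemma vid4 (a b q : H) (s : R) : (1 - s) *: a + s *: b - q = (1 - s) *: (a - q) + s *: (b - q).
Proof. by rewrite !scalerBr addrACA -opprD -scalerDl subrK scale1r. Qed.
End V.

Section Mann.
Variables (R : realType) (H : completeNormedModType R) (I : inner_product H).
Variables (C : set H) (N : H -> H) (M : R).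
Hypothesis C0 : C !=set0.
Hypothesis cC : closed C.
Hypothesis vC : convex_set C.
Hypothesis CM : forall y, C y -> `|y| <= M.
Hypothesis NC : forall y, C y -> C (N y).
Hypothesis Nne : forall y z, C y -> C z -> `|N y - N z| <= `|y - z|.
Variables (s : nat -> R) (x : nat -> H).
Hypothesis hs : forall n, 0 < s n /\ s n <= 2^-1.
Hypothesis hx : forall n, x n.+1 = (1 - s n) *: x n + s n *: N (x n).
Hypothesis x0C : C (x 0).
Hypothesis hdiv : forall A, exists n, A <= \sum_(i < n) s i * (1 - s i).

Lemma xC n : C (x n).
Proof.
elim: n => [//|n ih]; rewrite hx.
have [s0 s1] := hs n.
have := @convC R H C (x n) (N (x n)) (1 - s n) vC ih (NC ih).
have -> : 1 - (1 - s n) = s n by ring.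
by apply; lra.
Qed.

Definition res n := `|x n - N (x n)|.

Lemma fejer q n : C q -> N q = q ->
  `|x n.+1 - q| ^+ 2 <= `|x n - q| ^+ 2 - s n * (1 - s n) * res n ^+ 2.
Proof.
move=> Cq Nq; rewrite hx vid4 (@conv_id _ _ I) vid5.
have [s0 s1] := hs n.
have h : `|N (x n) - q| ^+ 2 <= `|x n - q| ^+ 2.
  by rewrite lerXn2r // ?nnegrE //; rewrite -{1}Nq; apply: Nne => //; apply: xC.
rewrite /res; nra.
Qed.

Lemma res_dec n : res n.+1 <= res n.
Proof.
have [s0 s1] := hs n.
rewrite /res {1}hx vid7.
apply: le_trans (ler_normD _ _) _.
rewrite normrZ ger0_norm; last lra.
have : `|N (x n) - N (x n.+1)| <= `|x n - x n.+1| by apply: Nne; apply: xC.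
rewrite {2}hx vid6 normrZ ger0_norm; last lra.
lra.
Qed.

Lemma res_ge0 n : 0 <= res n.
Proof. by rewrite /res. Qed.

Lemma res_mono m n : (m <= n)%N -> res n <= res m.
Proof.
move=> /subnK <-; elim: (n - m)%N => [|k ih]; first by rewrite add0n.
by rewrite addSn; apply: le_trans (res_dec _) ih.
Qed.

Lemma res_small eta : 0 < eta -> exists K, forall n, (K <= n)%N -> res n <= eta.
Proof.
move=> eta0.
have [q Cq Nq] := fix_ex I C0 cC vC CM NC Nne.
pose D := `|x 0 - q| ^+ 2.
have tele n : `|x n - q| ^+ 2 + \sum_(i < n) s i * (1 - s i) * res i ^+ 2 <= D.
  elim: n => [|n ih]; first by rewrite big_ord0 addr0.
  rewrite big_ord_recr /=; have := fejer n Cq Nq; lra.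
have [n0 hn0] := hdiv (D / eta ^+ 2 + 1).
exists n0 => n nn0; apply: le_trans (res_mono nn0) _.
have h1 : res n0 ^+ 2 * \sum_(i < n0) s i * (1 - s i) <= D.
  apply: le_trans (tele n0); rewrite mulr_sumr.
  have := sqr_ge0 `|x n0 - q|; suff : \sum_(i < n0) res n0 ^+ 2 * (s i * (1 - s i)) <=
     \sum_(i < n0) s i * (1 - s i) * res i ^+ 2 by lra.
  apply: ler_sum => i _; rewrite mulrC ler_wpM2l //.
    by have [s0 s1] := hs i; apply: mulr_ge0; lra.
  by rewrite lerXn2r ?nnegrE ?res_ge0 //; exact: res_mono (ltnW (ltn_ord i)).
have e2 : 0 < eta ^+ 2 by rewrite exprn_gt0.
have hD : eta ^+ 2 * (D / eta ^+ 2) = D by rewrite mulrC divfK // gt_eqF.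
have r0 : 0 <= res n0 by exact: res_ge0.
have D0 : 0 <= D by exact: sqr_ge0.
move: (\sum_(i < n0) s i * (1 - s i)) (D / eta ^+ 2) (res n0) hn0 h1 hD r0 => W A r.
move=> hW h1 hD r0.
have A0 : 0 <= A by rewrite -(ler_pM2l e2) mulr0 hD.

rewrite leNgt; apply/negP => hr.
have : eta ^+ 2 < r ^+ 2 by rewrite ltrXn2r // ?nnegrE //; lra.
move=> h2; have W0 : 0 < W by lra.
have : eta ^+ 2 * W < r ^+ 2 * W by rewrite ltr_pM2r.
nra.
Qed.

Lemma bx : bndv x.
Proof. exact: (bndC CM xC). Qed.

Lemma phi_eq P q : io P -> C q -> N q = q -> phi P x q = phi (fun _ => True) x q.
Proof.
move=> iP Cq Nq; apply: LS_noninc => //; first exact: (bnd_sq q bx).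
move=> n; have := fejer n Cq Nq; have [s0 s1] := hs n.
have := sqr_ge0 (res n); move=> h1 h2.
have : 0 <= s n * (1 - s n) * res n ^+ 2 by apply: mulr_ge0 => //; apply: mulr_ge0; lra.
lra.
Qed.

Lemma cen_fix P c : io P -> (forall z, phi P x c <= phi P x z) -> C c /\ N c = c.
Proof.
move=> iP hc.
have Cc : C c := center_in I C0 cC vC iP bx xC hc.
split => //; apply: (center_uniq I iP bx hc).
apply: (afix_phi C0 CM Nne iP xC Cc) => eta eta0.
exact: res_small.
Qed.

Lemma cen_all c : (forall z, phi (fun _ => True) x c <= phi (fun _ => True) x z) ->
  forall P, io P -> forall z, phi P x c <= phi P x z.
Proof.
move=> hc P iP z.
have [Cc Nc] := cen_fix iTrue hc.
have [cP hcP] := center_ex I iP bx.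
have [CcP NcP] := cen_fix iP hcP.
rewrite (phi_eq iP Cc Nc); apply: le_trans (hc cP) _.
by rewrite -(phi_eq iP CcP NcP).
Qed.

Lemma no_io_dir c y e : (forall z, phi (fun _ => True) x c <= phi (fun _ => True) x z) ->
  0 < e -> ~ io (fun n => e <= I (x n - c) y).
Proof.
move=> hc e0 iP.
have hcP := cen_all hc iP.
pose q := `|y| ^+ 2.
have q0 : 0 <= q by exact: sqr_ge0.
pose t := e / (q + 1).
have t0 : 0 < t by rewrite divr_gt0 //; lra.
have tq : t * q <= e.
  rewrite /t mulrAC ler_pdivrMr; last lra.
  by rewrite ler_pM2l //; lra.
have : phi (fun n => e <= I (x n - c) y) x (c + t *: y) <= phi (fun n => e <= I (x n - c) y) x c - t * e.
  apply: LS_ub => //; first exact: (bnd_sq _ bx).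
  move=> e' e'0; have [h1 _] := LS_spec iP (bnd_sq c bx).
  have [K hK] := h1 _ e'0; exists K => n Kn Pn.
  have -> : x n - (c + t *: y) = (x n - c) - t *: y by rewrite opprD addrA.
  rewrite (@normB2 _ _ I) normrZ exprMn (ger0_norm (ltW t0)) (@ipZr _ _ I) -/q.
  have := hK n Kn Pn; rewrite /phi => h.
  have : t * e <= t * I (x n - c) y by rewrite ler_pM2l.
  have : t * (t * q) <= t * e by rewrite ler_pM2l.
  move: (t * I (x n - c) y) => u; lra.
have := hcP (c + t *: y).
have : 0 < t * e by rewrite mulr_gt0.
lra.
Qed.

Lemma mann_weak : exists p, [/\ C p, N p = p & weak_cvg I x p].
Proof.
have [c hc] := center_ex I iTrue bx.
have [Cc Nc] := cen_fix iTrue hc.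
exists c; split => // y.
apply/cvgrPdist_le => e e0; apply/nearN.
apply: contrapT => hK.
have io0 : io (fun n => e < `|I (x n - c) y|).
  move=> K; apply: contrapT => hn; apply: hK; exists K => n Kn.
  rewrite -normrN opprB -(@ipBl _ _ I).
  by rewrite leNgt; apply/negP => h; apply: hn; exists n.
have [io1|nio1] := pselect (io (fun n => e <= I (x n - c) y)).
  exact: (no_io_dir hc e0 io1).
apply: (no_io_dir (y := - y) hc e0) => K.
have [K1 hK1] : exists K1, forall n, (K1 <= n)%N -> I (x n - c) y < e.
  apply: contrapT => h; apply: nio1 => K'.
  apply: contrapT => h'; apply: h; exists K' => n Kn.
  by rewrite ltNge; apply/negP => h2; apply: h'; exists n.
have [n [Kn hn]] := io0 (maxn K K1).
exists n; split; first exact: leq_trans (leq_maxl _ _) Kn.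
have := hK1 n (leq_trans (leq_maxr _ _) Kn).
rewrite (@ipNr _ _ I).
move: hn; case: (ler0P (I (x n - c) y)) => h hn; lra.
Qed.
End Mann.

Lemma Nexp_ok (R : realType) (H : normedModType R) (I : inner_product H) (b k w : R) (d a : H) :
  0 <= b -> k < 1 -> w = (1 - k) / (b + 1) ->
  `|b *: d + a| ^+ 2 <= (b + 1) ^+ 2 * `|d| ^+ 2 + k * `|d - a| ^+ 2 ->
  `|(1 - w) *: d + w *: a| ^+ 2 <= `|d| ^+ 2.
Proof.
move=> b0 k1 hw h.
rewrite (@conv_id _ _ I).
move: h; rewrite (@normD2 _ _ I) (@normB2 _ _ I) normrZ exprMn (ger0_norm b0) (@ipZl _ _ I).
move: (`|d| ^+ 2) (`|a| ^+ 2) (I d a) => D A X h.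
have b1 : 0 < b + 1 by lra.
have w0 : 0 < w by rewrite hw divr_gt0 //; lra.
have key : (b + 1) * (A - D) <= (b + k) * (D - 2 * X + A) by nra.
have hw' : (1 - w) * (b + 1) = b + k by rewrite hw; field; lra.
have key2 : (b + 1) * (A - D) <= (b + 1) * ((1 - w) * (D - 2 * X + A)).
  by rewrite mulrA [(b + 1) * (1 - w)]mulrC hw'.
rewrite ler_pM2l // in key2.
have : w * (A - D) <= w * ((1 - w) * (D - 2 * X + A)) by rewrite ler_pM2l.
lra.
Qed.

Lemma vidN (R : realType) (H : normedModType R) (w : R) (y z a c : H) :
  ((1 - w) *: y + w *: a) - ((1 - w) *: z + w *: c) = (1 - w) *: (y - z) + w *: (a - c).
Proof. by rewrite opprD addrACA -!scalerBr. Qed.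

Unset Implicit Arguments. Set Strict Implicit. Set Printing Implicit Defensive.

Theorem theorem5 (R : realType) (H : completeNormedModType R)
    (I : inner_product H) (C : set H) (T : H -> H) (b k : R) :
  C !=set0 -> closed C -> convex_set C -> bounded_set C ->
  (forall x, C x -> C (T x)) ->
  0 <= k -> enriched_spc C T b k ->
  Fix C T !=set0 /\
  exists lam : R, 0 < lam < 1 /\
    forall (x0 : H) (alpha : nat -> R),
      C x0 ->
      (forall n, k < alpha n < 1) ->
      [series (alpha n - k) * (1 - alpha n)]_n @ \oo --> +oo ->
      exists p, Fix C T p /\ weak_cvg I (km_iter T lam alpha x0) p.
Proof.
move=> C0 cC vC bC TC k0 [b0 [k1 hT]].
have [M _ hM] := pinfty_ex_gt0 bC.
have CM y : C y -> `|y| <= M by move=> Cy; exact: hM.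
pose w := (1 - k) / (b + 1).
have b1 : 0 < b + 1 by lra.
have w0 : 0 < w by rewrite divr_gt0 //; lra.
have w1 : w <= 1 by rewrite ler_pdivrMr // mul1r; lra.
pose N z := (1 - w) *: z + w *: T z.
have NC y : C y -> C (N y).
  move=> Cy; have := @convC R H C y (T y) (1 - w) vC Cy (TC _ Cy).
  have -> : 1 - (1 - w) = w by ring.
  by apply; lra.
have Nne y z : C y -> C z -> `|N y - N z| <= `|y - z|.
  move=> Cy Cz; rewrite /N vidN -(ler_pXn2r (_ : (0 < 2)%N)) ?nnegrE //.
  by apply: (Nexp_ok I b0 k1 (erefl w)); apply: hT.
have NT z : N z = z -> T z = z.
  move=> /eqP; rewrite -subr_eq0 /N.
  have -> : (1 - w) *: z + w *: T z - z = w *: (T z - z).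
    by rewrite scalerBl scale1r addrAC [z - _ - z]addrAC subrr add0r addrC -scalerBr.
  by rewrite scaler_eq0 gt_eqF //= subr_eq0 => /eqP.
split.
  have [c Cc Nc] := fix_ex I C0 cC vC CM NC Nne.
  by exists c; split => //; apply: NT.
exists (w / 2); split.
  by apply/andP; split; [rewrite divr_gt0 | rewrite ltr_pdivrMr //; lra].
move=> x0 alpha Cx0 ha hser.
pose s n := alpha n / 2.
pose x := km_iter T (w / 2) alpha x0.
have hs n : 0 < s n /\ s n <= 2^-1.
  by have /andP [h1 h2] := ha n; rewrite /s; split; lra.
have hx n : x n.+1 = (1 - s n) *: x n + s n *: N (x n).
  rewrite /x /= -/x /N scalerDr !scalerA addrA -scalerDl.
  congr (_ *: _ + _ *: _); rewrite /s; ring.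
have hdiv A : exists n, A <= \sum_(i < n) s i * (1 - s i).
  move/cvgryPge: hser => /(_ (4 * A)) /nearN [n hn].
  exists n; have := hn n (leqnn n); rewrite /series /= big_mkord => h.
  suff : \sum_(i < n) (alpha i - k) * (1 - alpha i) <= 4 * \sum_(i < n) s i * (1 - s i) by lra.
  rewrite mulr_sumr; apply: ler_sum => i _.
  have /andP [h1 h2] := ha i; rewrite /s; nra.
have [p [Cp Np wp]] := mann_weak I C0 cC vC CM NC Nne hs hx Cx0 hdiv.
by exists p; split => //; split => //; apply: NT.
Qed.
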